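(* $22 \le R(B_4,B_7) \le 23$.
   Context: For graphs $G,H$, the Ramsey number $R(G,H)$ is the smallest integer $N$ such that every red/blue coloring of the edges of $K_N$ contains a red copy of $G$ (as a subgraph, not necessarily induced) or a blue copy of $H$. The book $B_k$ is the graph on $k+2$ vertices consisting of an edge $uv$ together with $k$ further vertices, each adjacent exactly to $u$ and $v$. *)

(* Defs.v *)
From mathcomp Require Import all_boot.
Set Implicit Arguments. Unset Strict Implicit. Unset Printing Implicit Defensive.

(* A red/blue colouring of the edges of K_N on vertex set 'I_N:
   c x y = true means the edge xy is red, false means blue.
   Only values on pairs x != y matter; we require symmetry. *)
Definition coloring (N : nat) := 'I_N -> 'I_N -> bool.
Definition symmetric_coloring N (c : coloring N) : Prop :=
  forall x y : 'I_N, c x y = c y x.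

(* A (not necessarily induced) copy of the book B_k in colour b:
   a spine uv and k further distinct vertices (the set S, disjoint from
   {u,v}), each joined to both u and v, all these edges having colour b. *)
Definition has_mono_book N (c : coloring N) (b : bool) (k : nat) : Prop :=
  exists (u v : 'I_N) (S : {set 'I_N}),
    [/\ u != v, c u v = b, #|S| = k, u \notin S & v \notin S] /\
    (forall w, w \in S -> c u w = b /\ c v w = b).

Definition book_ramsey_prop (k l N : nat) : Prop :=
  forall c : coloring N, symmetric_coloring c ->
    has_mono_book c true k \/ has_mono_book c false l.

Definition is_book_ramsey_number (k l N : nat) : Prop :=
  book_ramsey_prop k l N /\ forall M, M < N -> ~ book_ramsey_prop k l M.

(* Main.v *)
Require Import Defs.
From mathcomp Require Import all_boot.
From mathcomp Require Import all_algebra all_field zify ring.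
From Stdlib Require Import Classical.
Set Implicit Arguments. Unset Strict Implicit. Unset Printing Implicit Defensive.

Module CombM.

Lemma subset_card_k (T : finType) (A : {set T}) k : k <= #|A| ->
  exists S : {set T}, S \subset A /\ #|S| = k.
Proof.
move=> hk; exists [set x in take k (enum A)]; split.
  by apply/subsetP => x; rewrite inE => /mem_take; rewrite mem_enum.
rewrite cardsE; move/card_uniqP: (take_uniq k (enum_uniq (mem A))) => ->.
by rewrite size_take -cardE; case: ltngtP hk => //= ->.
Qed.

Lemma card_sum (T : finType) (p : pred T) : #|[set w | p w]| = \sum_w (p w : nat).
Proof.
rewrite -sum1_card big_mkcond /=; apply: eq_bigr => w _; rewrite inE; by case: (p w).
Qed.

Lemma sumD1r n (F : 'I_n -> nat) j : \sum_k F k * (k == j) = F j.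
Proof.
rewrite (bigD1 j) //= eqxx muln1 big1 ?addn0 // => k /negbTE ->; by rewrite muln0.
Qed.

Lemma sumD1l n (F : 'I_n -> nat) i : \sum_k (i == k) * F k = F i.
Proof.
rewrite (bigD1 i) //= eqxx mul1n big1 ?addn0 // => k; rewrite eq_sym => /negbTE ->; by rewrite mul0n.
Qed.

Lemma even_sym_sum n (g : 'I_n -> 'I_n -> nat) :
  (forall x y, g x y = g y x) -> (forall x, g x x = 0) -> ~~ odd (\sum_x \sum_y g x y).
Proof.
move=> gs g0.
have E : \sum_x \sum_y g x y = \sum_x \sum_y (g x y * (x < y)) + \sum_x \sum_y (g x y * (y < x)).
  rewrite -big_split /=; apply: eq_bigr => x _; rewrite -big_split /=; apply: eq_bigr => y _.
  case: (ltngtP x y) => [h|h|/val_inj ->]; rewrite ?g0 //= ?muln0 ?muln1 ?addn0 ?add0n //.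
have E2 : \sum_x \sum_y (g x y * (y < x)) = \sum_x \sum_y (g x y * (x < y)).
  rewrite exchange_big /=; apply: eq_bigr => x0 _; apply: eq_bigr => y0 _; by rewrite gs.
by rewrite E E2 addnn odd_double.
Qed.

Lemma sum_eq_le n (F G : 'I_n -> nat) : (forall i, F i <= G i) ->
  \sum_i F i = \sum_i G i -> forall i, F i = G i.
Proof.
move=> le E i; case: (ltnP (F i) (G i)) => [lt|ge]; last by apply/eqP; rewrite eqn_leq le ge.
have : \sum_i F i < \sum_i G i.
  rewrite (bigD1 i) //= [X in _ < X](bigD1 i) //=.
  rewrite -addSn; apply: leq_add => //.
  by apply: leq_sum => j _; apply: le.
by rewrite E ltnn.
Qed.

Section Comb.
Variable c : coloring 23.
Hypothesis csym : symmetric_coloring c.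

Definition a (x y : 'I_23) : nat := (x != y) && c x y.
Definition b (x y : 'I_23) : nat := (x != y) && ~~ c x y.
Definition d x := \sum_w a x w.
Definition db x := \sum_w b x w.
Definition P x y := \sum_w a x w * a y w.
Definition Q x y := \sum_w b x w * b y w.

Lemma a_sym x y : a x y = a y x.
Proof. by rewrite /a eq_sym csym. Qed.
Lemma b_sym x y : b x y = b y x.
Proof. by rewrite /b eq_sym csym. Qed.
Lemma ab1 x y : a x y + b x y + (x == y) = 1.
Proof. by rewrite /a /b; case: (x == y); case: (c x y). Qed.
Lemma a_le1 x y : a x y <= 1. Proof. by rewrite /a; case: (_ && _). Qed.
Lemma b_le1 x y : b x y <= 1. Proof. by rewrite /b; case: (_ && _). Qed.
Lemma aa x y : a x y * a x y = a x y. Proof. by rewrite /a; case: (_ && _). Qed.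
Lemma bb x y : b x y * b x y = b x y. Proof. by rewrite /b; case: (_ && _). Qed.
Lemma ab0 x y : a x y * b x y = 0. Proof. by rewrite /a /b; case: (x != y); case: (c x y). Qed.
Lemma axx x : a x x = 0. Proof. by rewrite /a eqxx. Qed.
Lemma bxx x : b x x = 0. Proof. by rewrite /b eqxx. Qed.

Lemma split_sum x (F : 'I_23 -> nat) :
  \sum_w F w = \sum_w F w * a x w + \sum_w F w * b x w + F x.
Proof.
rewrite -(sumD1r F x) -!big_split /=; apply: eq_bigr => w _.
by rewrite -!mulnDr [w == x]eq_sym ab1 muln1.
Qed.

Lemma d_db x : d x + db x = 22.
Proof.
have h := split_sum x (fun _ => 1).
have e1 : \sum_w 1 * a x w = d x by apply: eq_bigr => w _; rewrite mul1n.
have e2 : \sum_w 1 * b x w = db x by apply: eq_bigr => w _; rewrite mul1n.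
rewrite e1 e2 sum_nat_const card_ord in h; lia.
Qed.

Lemma P_sym x y : P x y = P y x.
Proof. by apply: eq_bigr => w _; rewrite mulnC. Qed.
Lemma Q_sym x y : Q x y = Q y x.
Proof. by apply: eq_bigr => w _; rewrite mulnC. Qed.
Lemma Pxx x : P x x = d x.
Proof. by apply: eq_bigr => w _; rewrite aa. Qed.

Definition E v x := \sum_y a x y * b v y.
Lemma idd v x : d x = P v x + E v x + a x v.
Proof.
rewrite /d (split_sum v (a x)) /P /E; congr (_ + _ + _).
by apply: eq_bigr => w _; rewrite mulnC.
Qed.

Lemma iddb v y : db y + P v y + a v y = d v + Q v y + b y v.
Proof.
have h1 := split_sum v (b y).
have h2 := split_sum y (a v).
rewrite /db /d /P /Q h1 h2.
have -> : \sum_w b y w * a v w = \sum_w a v w * b y w by apply: eq_bigr => w _; rewrite mulnC.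
have -> : \sum_w b y w * b v w = \sum_w b v w * b y w by apply: eq_bigr => w _; rewrite mulnC.
rewrite (a_sym v y) b_sym; lia.
Qed.

Definition A1 v := \sum_x a v x * P v x.
Definition B1 v := \sum_y b v y * Q v y.
Definition S1 v := \sum_x a v x * d x.
Definition S2 v := \sum_y b v y * db y.
Definition M v := \sum_y b v y * P v y.

Lemma S1_eq v : S1 v = A1 v + M v + d v.
Proof.
rewrite /S1.
under eq_bigr => x _ do rewrite (idd v x) !mulnDr.
rewrite !big_split /= /A1; congr (_ + _ + _).
- rewrite /M /E.
  under eq_bigr => x _ do rewrite big_distrr /=.
  rewrite exchange_big /=; apply: eq_bigr => y _.
  rewrite /P big_distrr /=; apply: eq_bigr => x _.
  rewrite (a_sym x y); lia.
- by apply: eq_bigr => x _; rewrite (a_sym x v) aa.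
Qed.

Lemma S2_eq v : S2 v + M v = db v * d v + B1 v + db v.
Proof.
rewrite /S2 /M -big_split /=.
have -> : \sum_y (b v y * db y + b v y * P v y) = \sum_y (b v y * d v + b v y * Q v y + b v y).
  apply: eq_bigr => y _.
  have h1 := iddb v y; have h2 := ab0 v y; rewrite (b_sym y v) in h1.
  have := b_le1 v y; case E0: (b v y) => [|[|k]] // _.
  rewrite E0 muln1 in h2; rewrite h2 in h1; lia.
rewrite !big_split /= /B1 /db; congr (_ + _ + _).
by rewrite -big_distrl /= mulnC.
Qed.

Lemma aP x y : a x y = 1 -> x != y /\ c x y.
Proof. by rewrite /a; case: (x != y); case: (c x y). Qed.
Lemma bP x y : b x y = 1 -> x != y /\ c x y = false.
Proof. by rewrite /b; case: (x != y); case: (c x y). Qed.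

Lemma Pbound : ~ has_mono_book c true 4 -> forall x y, a x y = 1 -> P x y <= 3.
Proof.
move=> nb x y axy; rewrite leqNgt; apply/negP => h; apply: nb.
set A := [set w | (w != x) && (w != y) && (c x w == true) && (c y w == true)].
have cA : #|A| = P x y.
  rewrite /A card_sum; apply: eq_bigr => w _; rewrite /a (eq_sym x w) (eq_sym y w).
  by case: (w != x); case: (w != y); case: (c x w); case: (c y w).
have hk : 4 <= #|A| by rewrite cA.
have [S [sub cS]] := @subset_card_k _ A 4 hk.
have [xy cxy] := aP axy.
exists x, y, S; split; first split => //.
- apply/negP => /(subsetP sub); by rewrite inE eqxx.
- apply/negP => /(subsetP sub); by rewrite inE eqxx andbF.
- move=> w /(subsetP sub); rewrite inE => /andP [/andP [_ /eqP ->] /eqP ->]; done.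
Qed.

Lemma Qbound : ~ has_mono_book c false 7 -> forall x y, b x y = 1 -> Q x y <= 6.
Proof.
move=> nb x y bxy; rewrite leqNgt; apply/negP => h; apply: nb.
set A := [set w | (w != x) && (w != y) && (c x w == false) && (c y w == false)].
have cA : #|A| = Q x y.
  rewrite /A card_sum; apply: eq_bigr => w _; rewrite /b (eq_sym x w) (eq_sym y w).
  by case: (w != x); case: (w != y); case: (c x w); case: (c y w).
have hk : 7 <= #|A| by rewrite cA.
have [S [sub cS]] := @subset_card_k _ A 7 hk.
have [xy cxy] := bP bxy.
exists x, y, S; split; first split => //.
- apply/negP => /(subsetP sub); by rewrite inE eqxx.
- apply/negP => /(subsetP sub); by rewrite inE eqxx andbF.
- move=> w /(subsetP sub); rewrite inE => /andP [/andP [_ /eqP ->] /eqP ->]; done.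
Qed.

Lemma quad (n m : nat) : n + m = 22 -> 4 * n + m * n + 7 * m <= n * n + m * m.
Proof. move=> h; have : n <= 10 \/ 11 <= n by lia. case => h'; nia. Qed.

Lemma quad_eq (n m : nat) : n + m = 22 -> 4 * n + m * n + 7 * m = n * n + m * m -> n = 10 \/ n = 11.
Proof.
move=> h e; have : n <= 9 \/ n = 10 \/ n = 11 \/ 12 <= n by lia.
case => [h'|[->|[->|h']]]; [nia|by left|by right|nia].
Qed.

Section Key.
Hypothesis nbr : ~ has_mono_book c true 4.
Hypothesis nbb : ~ has_mono_book c false 7.

Lemma HA v : A1 v <= 3 * d v.
Proof.
rewrite /A1 /d big_distrr /=; apply: leq_sum => x _.
have := a_le1 v x; case E0: (a v x) => [|[|k]] //= _.
by rewrite mul1n muln1; apply: Pbound.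
Qed.

Lemma HB v : B1 v <= 6 * db v.
Proof.
rewrite /B1 /db big_distrr /=; apply: leq_sum => x _.
have := b_le1 v x; case E0: (b v x) => [|[|k]] //= _.
by rewrite mul1n muln1; apply: Qbound.
Qed.

Lemma sumS1 : \sum_v S1 v = \sum_v d v * d v.
Proof.
rewrite /S1 exchange_big /=; apply: eq_bigr => x _.
rewrite -big_distrl /= mulnC; congr (_ * _); rewrite /d; apply: eq_bigr => v _; apply: a_sym.
Qed.

Lemma sumS2 : \sum_v S2 v = \sum_v db v * db v.
Proof.
rewrite /S2 exchange_big /=; apply: eq_bigr => x _.
rewrite -big_distrl /= mulnC; congr (_ * _); rewrite /db; apply: eq_bigr => v _; apply: b_sym.
Qed.

Lemma tight v : [/\ A1 v = 3 * d v, B1 v = 6 * db v & (d v = 10 \/ d v = 11)].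
Proof.
pose Z v := A1 v + d v + db v * d v + B1 v + db v.
have hZ : forall v, Z v <= d v * d v + db v * db v.
  move=> u; have := HA u; have := HB u; have := quad (d_db u); rewrite /Z; lia.
have hS : \sum_v Z v = \sum_v (d v * d v + db v * db v).
  rewrite [RHS]big_split /= -sumS1 -sumS2 -big_split /=; apply: eq_bigr => u _.
  have := S1_eq u; have := S2_eq u; rewrite /Z; lia.
have := sum_eq_le hZ hS v; rewrite /Z => e.
have := HA v; have := HB v; have := quad (d_db v); have := d_db v => h1 h2 h3 h4.
have e3 : 4 * d v + db v * d v + 7 * db v = d v * d v + db v * db v by lia.
split; [lia|lia|exact: quad_eq (d_db v) e3].
Qed.

Lemma Ptight v x : a v x = 1 -> P v x = 3.
Proof.
move=> h.
have le : forall x, a v x * P v x <= 3 * a v x.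
  move=> y; have := a_le1 v y; case E0: (a v y) => [|[|k]] //= _.
  by rewrite mul1n muln1; apply: Pbound.
have [e _ _] := tight v.
have : \sum_x a v x * P v x = \sum_x 3 * a v x by rewrite -big_distrr /= -e.
move/(sum_eq_le le) => /(_ x); rewrite h; lia.
Qed.

Lemma Qtight v x : b v x = 1 -> Q v x = 6.
Proof.
move=> h.
have le : forall x, b v x * Q v x <= 6 * b v x.
  move=> y; have := b_le1 v y; case E0: (b v y) => [|[|k]] //= _.
  by rewrite mul1n muln1; apply: Qbound.
have [_ e _] := tight v.
have : \sum_x b v x * Q v x = \sum_x 6 * b v x by rewrite -big_distrr /= -e.
move/(sum_eq_le le) => /(_ x); rewrite h; lia.
Qed.

Lemma d10 v : d v = 10.
Proof.
have [e _ h] := tight v.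
have ev : ~~ odd (A1 v).
  rewrite /A1 /P.
  under eq_bigr => x _ do rewrite big_distrr /=.
  apply: (@even_sym_sum 23 (fun x w => a v x * (a v w * a x w))).
    move=> x y /=; rewrite (a_sym x y); lia.
  by move=> x /=; rewrite axx !muln0.
move: ev; rewrite e oddM /=; case: h => ->; done.
Qed.

Definition f (i j : 'I_23) : nat := a i j + (i == j).

Lemma f_sq i j : \sum_k f i k * f k j = 6 * (i == j) + 5.
Proof.
rewrite /f.
under eq_bigr => k _ do rewrite mulnDl !mulnDr.
rewrite !big_split /= sumD1r sumD1l.
have -> : \sum_k (i == k) * (k == j) = (i == j) by rewrite (sumD1l (fun k => nat_of_bool (k == j))).
have -> : \sum_k a i k * a k j = P i j by apply: eq_bigr => k _; rewrite (a_sym k j).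
case: (eqVneq i j) => [<-|ne].
  by rewrite Pxx d10 axx.
have := ab1 i j; rewrite (negbTE ne) addn0.
have := a_le1 i j; case E0: (a i j) => [|[|k]] //= _.
- rewrite add0n => hb.
  have := iddb i j; rewrite Qtight // E0 (b_sym j i) hb d10.
  have := d_db j; rewrite d10 => h1 h2; lia.
- by rewrite Ptight.
Qed.

Lemma f_row i : \sum_j f i j = 11.
Proof.
have := sumD1l (fun _ => 1) i.
under eq_bigr => k _ do rewrite muln1.
by rewrite /f big_split /= => ->; rewrite -/(d i) d10.
Qed.

Lemma f_tr : \sum_i f i i = 23.
Proof.
rewrite /f; under eq_bigr => i _ do rewrite axx eqxx.
by rewrite sum_nat_const card_ord.
Qed.
End Key.
End Comb.

End CombM.
Import CombM.

Module LB.
Definition tab : seq (seq bool) := [::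
[:: false; true; true; true; false; true; true; false; false; false; false; false; false; false; false; true; true; false; true; false; false];
[:: true; false; true; false; false; false; true; true; false; false; true; true; false; true; false; false; true; false; false; false; false];
[:: true; true; false; false; false; true; false; false; false; false; false; true; false; true; true; false; false; false; true; false; true];
[:: true; false; false; false; true; true; true; false; true; true; false; false; false; false; false; false; false; false; true; true; false];
[:: false; false; false; true; false; true; false; false; false; true; true; false; false; true; true; false; true; false; false; true; false];
[:: true; false; true; true; true; false; false; false; true; false; false; false; false; false; true; false; true; true; false; false; false];
[:: true; true; false; true; false; false; false; true; true; true; false; true; true; false; false; false; false; false; false; false; false];
[:: false; true; false; false; false; false; true; false; true; false; false; false; true; true; false; false; true; true; false; true; false];
[:: false; false; false; true; false; true; true; true; false; false; false; true; false; false; false; false; false; true; false; true; true];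
[:: false; false; false; true; true; false; true; false; false; false; true; true; true; false; true; true; false; false; false; false; false];
[:: false; true; false; false; true; false; false; false; false; true; false; true; false; false; false; true; true; false; false; true; true];
[:: false; true; true; false; false; false; true; false; true; true; true; false; false; false; true; false; false; false; false; false; true];
[:: false; false; false; false; false; false; true; true; false; true; false; false; false; true; true; true; false; true; true; false; false];
[:: false; true; true; false; true; false; false; true; false; false; false; false; true; false; true; false; false; false; true; true; false];
[:: false; false; true; false; true; true; false; false; false; true; false; true; true; true; false; false; false; true; false; false; false];
[:: true; false; false; false; false; false; false; false; false; true; true; false; true; false; false; false; true; true; true; false; true];
[:: true; true; false; false; true; true; false; true; false; false; true; false; false; false; false; true; false; true; false; false; false];
[:: false; false; false; false; false; true; false; true; true; false; false; false; true; false; true; true; true; false; false; false; true];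
[:: true; false; true; true; false; false; false; false; false; false; false; false; true; true; false; true; false; false; false; true; true];
[:: false; false; false; true; true; false; false; true; true; false; true; false; false; true; false; false; false; false; true; false; true];
[:: false; false; true; false; false; false; false; false; true; false; true; true; false; false; false; true; false; true; true; true; false]
].
Definition cn (i j : nat) : bool := nth false (nth [::] tab i) j.
Definition c0 : coloring 21 := fun i j => cn i j.

Lemma card_iota n (P : pred nat) : #|[set w : 'I_n | P (val w)]| = count P (iota 0 n).
Proof.
rewrite cardsE cardE /enum_mem size_filter -val_enum_ord count_map enumT.
by apply: eq_count.
Qed.

Lemma memI (x : 'I_21) : (val x) \in iota 0 21.
Proof. by rewrite mem_iota leq0n add0n ltn_ord. Qed.

Lemma cn_sym_b : all (fun x => all (fun y => cn x y == cn y x) (iota 0 21)) (iota 0 21).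
Proof. by vm_compute. Qed.

Lemma c0_sym : symmetric_coloring c0.
Proof.
move=> x y; rewrite /c0; apply/eqP.
have := allP cn_sym_b x; move=> /(_ (memI _)) H.
by have := allP H y; move=> /(_ (memI _)).
Qed.

Definition chk (b : bool) (k : nat) :=
  all (fun u => all (fun v => ((u != v) && (cn u v == b)) ==>
     (count (fun w => (w != u) && (w != v) && (cn u w == b) && (cn v w == b)) (iota 0 21) < k))
   (iota 0 21)) (iota 0 21).

Lemma chk1 : chk true 4. Proof. by vm_compute. Qed.
Lemma chk2 : chk false 7. Proof. by vm_compute. Qed.

Lemma book_common N (c : coloring N) b k : has_mono_book c b k ->
  exists u v : 'I_N, [/\ u != v, c u v = b &
   k <= #|[set w : 'I_N | (w != u) && (w != v) && (c u w == b) && (c v w == b)]| ].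
Proof.
move=> [u [v [S [[huv hc hS huS hvS] hw]]]].
exists u, v; split => //; rewrite -hS; apply: subset_leq_card.
apply/subsetP => w wS; rewrite inE; have [h1 h2] := hw w wS.
rewrite h1 h2 !eqxx !andbT; apply/andP; split; apply/eqP => E; subst;
 [by rewrite wS in huS | by rewrite wS in hvS].
Qed.

Lemma c0_nobook b k : chk b k -> ~ has_mono_book c0 b k.
Proof.
move=> H /book_common [u [v [huv hc hk]]].
have := allP H u; move=> /(_ (memI _)) H'.
have := allP H' v; move=> /(_ (memI _)).
have -> : (val u != val v) by [].
rewrite /c0 in hc hk; rewrite hc eqxx /=.
move: hk; rewrite (_ : [set w | _] = [set w : 'I_21 | (val w != val u) && (val w != val v) && (cn u w == b) && (cn v w == b)]).
  by rewrite (card_iota 21 (fun w => (w != u) && (w != v) && (cn u w == b) && (cn v w == b))) => H1 H2; move: (leq_trans H2 H1); rewrite ltnn.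
by apply/setP => w; rewrite !inE.
Qed.

End LB.
Import LB.

Lemma desc (n k m : nat) : (k <= n)%N -> k * k = 6 * (m * m) -> k = 0.
Proof.
elim: n k m => [|n IH] k m; first by rewrite leqn0 => /eqP.
move=> hk E.
have hok : ~~ odd k.
  apply/negP => hok; move: (congr1 odd E); by rewrite !oddM hok.
have ek : k = (k./2 * 2)%N by rewrite -{1}(odd_double_half k) (negbTE hok) add0n -muln2.
have E2 : (2 * (k./2 * k./2) = 3 * (m * m))%N by rewrite ek in E; nia.
have hom : ~~ odd m.
  apply/negP => hom; move: (congr1 odd E2); by rewrite !oddM hom.
have em : m = (m./2 * 2)%N by rewrite -{1}(odd_double_half m) (negbTE hom) add0n -muln2.
have E3 : (k./2 * k./2 = 6 * (m./2 * m./2))%N by rewrite em in E2; nia.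
have h0 : k./2 = 0%N.
  apply: (IH _ m./2) E3; lia.
lia.
Qed.



Section MatSec.
Import GRing.Theory Num.Theory.
Local Open Scope ring_scope.
Lemma sum_decomp (s : algC) (rs : seq algC) :
  (forall z, z \in rs -> z = 11 \/ z = s \/ z = - s) ->
  exists (c : nat) (m : int), \sum_(z <- rs) z = c%:R * 11 + m%:~R * s.
Proof.
elim: rs => [|z rs IH] H; first by exists 0%N, 0; rewrite big_nil mul0r add0r mul0r.
have [c [m E]] : exists (c : nat) (m : int), \sum_(z <- rs) z = c%:R * 11 + m%:~R * s.
  by apply: IH => y yin; apply: H; rewrite inE yin orbT.
rewrite big_cons E.
case: (H z (mem_head _ _)) => [->|[->|->]].
- by exists c.+1, m; rewrite mulrSr; ring.
- by exists c, (m + 1); rewrite intrD; ring.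
- by exists c, (m - 1); rewrite intrD; ring.
Qed.

Lemma no_mat (Y : 'M[algC]_23) :
  Y *m Y = 6%:M + 5%:R *: (const_mx 1 : 'M[algC]_23) ->
  Y *m (const_mx 1 : 'M[algC]_23) = 11%:R *: (const_mx 1 : 'M[algC]_23) -> \tr Y = 23%:R -> False.
Proof.
move=> HY2 HYJ Htr.
have [rs Hrs] := closed_field_poly_normal (char_poly Y).
rewrite (monicP (char_poly_monic Y)) scale1r in Hrs.
have Hsz : size rs = 23%N.
  have := size_char_poly Y; rewrite Hrs size_prod_XsubC; by case.
have Hroots : forall z, z \in rs -> z = 11 \/ z ^+ 2 = 6.
  move=> z zin.
  have : eigenvalue Y z by rewrite eigenvalue_root_char Hrs root_prod_XsubC.
  move/eigenvalueP => [v Hv vnz].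
  set J : 'M[algC]_23 := const_mx 1.
  have H1 : (z - 11) *: (v *m J) = 0.
    by rewrite scalerBl (scalemxAl z) -Hv -mulmxA HYJ scalemxAr subrr.
  move/eqP: H1; rewrite scaler_eq0 subr_eq0 => /orP [/eqP ->|/eqP vJ]; first by left.
  right.
  have H2 : v *m (Y *m Y) = z ^+ 2 *: v by rewrite mulmxA Hv -scalemxAl Hv scalerA expr2.
  rewrite HY2 mulmxDr -scalemxAr vJ scaler0 addr0 mul_mx_scalar in H2.
  apply/eqP; rewrite eq_sym -subr_eq0; apply/eqP.
  have : (6 - z ^+ 2) *: v = 0 by rewrite scalerBl H2 subrr.
  by move/eqP; rewrite scaler_eq0 (negbTE vnz) orbF => /eqP.
pose s : algC := sqrtC 6.
have Hs : s ^+ 2 = 6 by rewrite sqrtCK.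
have H3 : forall z, z \in rs -> z = 11 \/ z = s \/ z = - s.
  move=> z /Hroots [->|Hz]; first by left.
  right; have : (z - s) * (z + s) == 0 by rewrite -subr_sqr Hz Hs subrr.
  rewrite mulf_eq0 => /orP [|]; rewrite ?subr_eq0 ?addr_eq0 => /eqP ->; [by left|by right].
have [c [m Hsum]] := sum_decomp H3.
have Htr2 : \sum_(z <- rs) z = 23.
  have E := @coefPn_prod_XsubC _ rs; rewrite Hsz in E.
  have := char_poly_trace Y isT; rewrite Hrs E // => /eqP.
  by rewrite eqr_opp Htr => /eqP.
rewrite Hsum in Htr2.
have Hms : m%:~R * s = (23 - 11 * c%:Z)%:~R.
  rewrite intrD intrN intrM -[23%:~R]/(23%:R : algC) -[11%:~R]/(11%:R : algC) -[c%:~R]/(c%:R : algC).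
  rewrite -Htr2; ring.
have Hint : (m * m * 6 = (23 - 11 * c%:Z) * (23 - 11 * c%:Z))%R.
  apply: (@intr_inj algC); rewrite !intrM -Hms -[6%:~R]/(6%:R : algC) -Hs; ring.
have : absz (23 - 11 * c%:Z)%R = 0%N.
  apply: (@desc (absz (23 - 11 * c%:Z)%R) _ (absz m)) => //.
  by rewrite -!abszM -Hint abszM mulnC.
lia.
Qed.

Lemma no_natmat (f : 'I_23 -> 'I_23 -> nat) :
  (forall i j, \sum_k f i k * f k j = 6 * (i == j) + 5)%N ->
  (forall i, \sum_j f i j = 11)%N -> (\sum_i f i i = 23)%N -> False.
Proof.
move=> H2 H1 Ht.
pose Y : 'M[algC]_23 := \matrix_(i, j) (f i j)%:R.
apply: (@no_mat Y).
- apply/matrixP => i j; rewrite !mxE.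
  under eq_bigr => k _ do rewrite !mxE -natrM.
  by rewrite -natr_sum H2 mulr1 natrD natrM mulr_natr; case: (i == j).
- apply/matrixP => i j; rewrite !mxE.
  under eq_bigr => k _ do rewrite !mxE mulr1.
  by rewrite -natr_sum H1 mulr1.
- rewrite /mxtrace; under eq_bigr => k _ do rewrite !mxE.
  by rewrite -natr_sum Ht.
Qed.

End MatSec.


Lemma mono_prop k l M M' : M <= M' -> book_ramsey_prop k l M -> book_ramsey_prop k l M'.
Proof.
move=> le H c csym.
pose f : 'I_M -> 'I_M' := widen_ord le.
have finj : injective f by move=> x y /(congr1 val) => /= /val_inj.
have := H (fun x y => c (f x) (f y)) (fun x y => csym _ _).
have tr b kk : has_mono_book (fun x y => c (f x) (f y)) b kk -> has_mono_book c b kk.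
  move=> [u [v [S [[huv hc hS huS hvS] hw]]]].
  exists (f u), (f v), (f @: S); split; last first.
    by move=> w /imsetP [w' w'S ->]; apply: hw.
  split => //.
  - by rewrite card_imset.
  - by rewrite (mem_imset _ _ finj).
  - by rewrite (mem_imset _ _ finj).
by case=> [/tr|/tr]; [left|right].
Qed.

Lemma not_prop21 : ~ book_ramsey_prop 4 7 21.
Proof.
move=> H; case: (H c0 c0_sym) => h.
- by apply: (c0_nobook chk1).
- by apply: (c0_nobook chk2).
Qed.

Lemma prop23 : book_ramsey_prop 4 7 23.
Proof.
move=> c csym.
case: (classic (has_mono_book c true 4)) => [h|nr]; first by left.
case: (classic (has_mono_book c false 7)) => [h|nb]; first by right.
exfalso; apply: (@no_natmat (f c)).
- exact: f_sq csym nr nb.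
- exact: f_row csym nr nb.
- exact: f_tr.
Qed.

Theorem mainTheorem8 :
  exists N, is_book_ramsey_number 4 7 N /\ 22 <= N <= 23.
Proof.
have nle M : M <= 21 -> ~ book_ramsey_prop 4 7 M.
  by move=> le H; apply: not_prop21; apply: mono_prop H.
case: (classic (book_ramsey_prop 4 7 22)) => H22.
  exists 22; split => //; split => // M lt; apply: nle; exact: lt.
exists 23; split => //; split; first exact: prop23.
move=> M; rewrite ltnS leq_eqVlt => /orP [/eqP ->|lt] //; exact: nle.
Qed.
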